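(* Let $I=[0,1]$ and let $G$ be a group with an injective homomorphism $\rho: G \to \mathrm{Diff}^1_+(I)$ (so $G$ acts on $I$ via $\rho$). Let $H$ be a finitely generated subgroup of $G$ with generating set $S=\{h_1,\dots,h_n\}$. Let $p\in I$ lie in the frontier of $\mathrm{fix}(H)$, and let $(p_m)$ be a sequence of points of $I\setminus \mathrm{fix}(H)$ with $p_m\to p$. Then there exist sequences $k_m\in\{1,\dots,n\}$ and $e_m\in\{+1,-1\}$ such that for every $h\in[H,H]$ there is an $M$ (depending on $h$) with $$h <_{p_m} h_{k_m}^{e_m}\quad\text{for all } m\ge M,$$ i.e. $h(p_m) < h_{k_m}^{e_m}(p_m)$ for all $m \ge M$.
   Context: $\mathrm{Diff}^1_+(I)$ denotes the group of orientation-preserving $C^1$ diffeomorphisms of the closed interval $I=[0,1]$. For a subgroup $H$ acting on $I$, $\mathrm{fix}(H)$ denotes the set of points of $I$ fixed by every element of $H$, and $[H,H]$ is the commutator subgroup of $H$. For a group $G$ acting on $I$ by orientation-preserving homeomorphisms and a point $q\in I$, the relation $<_q$ on $G$ is defined by: $a <_q b$ if and only if $a(q) < b(q)$ in $I$. *)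

(* Defs.v *)
From Stdlib Require Import Reals.
Open Scope R_scope.
Set Implicit Arguments.
Unset Strict Implicit.

Definition inI (x : R) : Prop := 0 <= x <= 1.

Definition C1_on_I (f : R -> R) : Prop :=
  exists f' : R -> R,
    (forall x, inI x -> forall eps, 0 < eps -> exists delta, 0 < delta /\
       forall y, inI y -> 0 < Rabs (y - x) < delta ->
         Rabs ((f y - f x) / (y - x) - f' x) < eps) /\
    (forall x, inI x -> forall eps, 0 < eps -> exists delta, 0 < delta /\
       forall y, inI y -> Rabs (y - x) < delta -> Rabs (f' y - f' x) < eps).

Definition Diff1p (f : R -> R) : Prop :=
  (forall x, inI x -> inI (f x)) /\
  (exists g : R -> R,
     (forall x, inI x -> inI (g x) /\ f (g x) = x /\ g (f x) = x) /\
     C1_on_I f /\ C1_on_I g) /\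
  (forall x y, inI x -> inI y -> x < y -> f x < f y).

Record is_group (G : Type) (mul : G -> G -> G) (inv : G -> G) (one : G) : Prop := {
  grp_assoc : forall a b c, mul a (mul b c) = mul (mul a b) c;
  grp_one_l : forall a, mul one a = a;
  grp_one_r : forall a, mul a one = a;
  grp_inv_l : forall a, mul (inv a) a = one;
  grp_inv_r : forall a, mul a (inv a) = one }.

Definition inj_hom_Diff1p (G : Type) (mul : G -> G -> G) (one : G)
  (rho : G -> R -> R) : Prop :=
  (forall g, Diff1p (rho g)) /\
  (forall a b x, inI x -> rho (mul a b) x = rho a (rho b x)) /\
  (forall x, inI x -> rho one x = x) /\
  (forall a b, (forall x, inI x -> rho a x = rho b x) -> a = b).

Inductive gen_by (G : Type) (mul : G -> G -> G) (inv : G -> G) (one : G)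
  (P : G -> Prop) : G -> Prop :=
| gen_base : forall x, P x -> gen_by mul inv one P x
| gen_one : gen_by mul inv one P one
| gen_mul : forall x y, gen_by mul inv one P x -> gen_by mul inv one P y ->
            gen_by mul inv one P (mul x y)
| gen_inv : forall x, gen_by mul inv one P x -> gen_by mul inv one P (inv x).

Definition commutator_subgroup (G : Type) (mul : G -> G -> G) (inv : G -> G)
  (one : G) (H : G -> Prop) : G -> Prop :=
  gen_by mul inv one
    (fun c => exists a b, H a /\ H b /\ c = mul (mul (inv a) (inv b)) (mul a b)).

Definition fixset (G : Type) (rho : G -> R -> R) (H : G -> Prop) (q : R) : Prop :=
  inI q /\ forall h, H h -> rho h q = q.

Definition frontier_in_I (F : R -> Prop) (p : R) : Prop :=
  inI p /\
  (forall eps, 0 < eps -> exists q, F q /\ Rabs (q - p) < eps) /\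
  (forall eps, 0 < eps -> exists q, inI q /\ ~ F q /\ Rabs (q - p) < eps).

(* x^e for a sign e in {+1,-1}, encoded as a boolean (true = +1, false = -1). *)
Definition signed_pow (G : Type) (inv : G -> G) (x : G) (e : bool) : G :=
  if e then x else inv x.

(* Main.v *)
Require Import Defs.
From Stdlib Require Import Reals Lra Lia ClassicalEpsilon Classical.
Open Scope R_scope.


Definition Sd (f : R -> R) (p lam : R) : Prop :=
  forall eps, 0 < eps -> exists del, 0 < del /\
    forall y z, inI y -> inI z -> Rabs (y - p) < del -> Rabs (z - p) < del ->
      Rabs (f y - f z - lam * (y - z)) <= eps * Rabs (y - z).

Ltac rabs_split :=
  repeat match goal with
  | |- context [Rabs ?x] =>
      destruct (Rcase_abs x); [rewrite (Rabs_left x) by assumption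
                              | rewrite (Rabs_right x) by assumption]
  | H : context [Rabs ?x] |- _ =>
      destruct (Rcase_abs x); [rewrite (Rabs_left x) in H by assumption
                              | rewrite (Rabs_right x) in H by assumption]
  end.

Lemma test (a b e: R) : 0 < e -> Rabs (a - b) <= e * Rabs a -> True.
Proof. intros. rabs_split; auto. Qed.

Lemma deriv_interior (f f' : R -> R) :
  (forall x, inI x -> forall eps, 0 < eps -> exists delta, 0 < delta /\
       forall y, inI y -> 0 < Rabs (y - x) < delta ->
         Rabs ((f y - f x) / (y - x) - f' x) < eps) ->
  forall c, 0 < c < 1 -> derivable_pt_lim f c (f' c).
Proof.
  intros Hd c Hc eps Heps.
  destruct (Hd c ltac:(unfold inI; lra) eps Heps) as [d [Hd0 Hd1]].
  assert (Hpos : 0 < Rmin d (Rmin c (1 - c))).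
  { apply Rmin_pos; [lra | apply Rmin_pos; lra]. }
  exists (mkposreal _ Hpos). intros h Hh Hhd. simpl in Hhd.
  assert (H1 := Rmin_l d (Rmin c (1 - c))).
  assert (H2 := Rmin_r d (Rmin c (1 - c))).
  assert (H3 := Rmin_l c (1 - c)). assert (H4 := Rmin_r c (1 - c)).
  replace h with ((c + h) - c) at 2 by ring.
  apply Hd1.
  - unfold inI. revert Hhd. rabs_split; intros; lra.
  - replace (c + h - c) with h by ring. split. now apply Rabs_pos_lt. lra.
Qed.


Lemma piece (f f' : R -> R) lam K x y :
  Rabs ((f y - f x) / (y - x) - f' x) < K ->
  Rabs (f' x - lam) <= K -> y <> x ->
  Rabs (f y - f x - lam * (y - x)) <= 2 * K * Rabs (y - x).
Proof.
  intros H1 H2 Hyx.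
  set (q := (f y - f x) / (y - x)) in *.
  replace (f y - f x - lam * (y - x)) with ((q - lam) * (y - x)).
  2:{ unfold q. field. lra. }
  rewrite Rabs_mult. apply Rmult_le_compat_r. apply Rabs_pos.
  replace (q - lam) with ((q - f' x) + (f' x - lam)) by ring.
  eapply Rle_trans. apply Rabs_triang. lra.
Qed.

Lemma mvi (f f' : R -> R) lam K a b :
  (forall x, inI x -> forall eps, 0 < eps -> exists delta, 0 < delta /\
       forall y, inI y -> 0 < Rabs (y - x) < delta ->
         Rabs ((f y - f x) / (y - x) - f' x) < eps) ->
  0 < K -> inI a -> inI b -> a < b ->
  (forall c, a <= c <= b -> Rabs (f' c - lam) <= K) ->
  Rabs (f b - f a - lam * (b - a)) <= 2 * K * (b - a).
Proof.
  intros Hd HK Ha Hb Hab HB. unfold inI in *.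
  destruct (Hd a Ha K HK) as [da [Hda Hda1]].
  destruct (Hd b Hb K HK) as [db [Hdb Hdb1]].
  set (a' := a + Rmin (da/2) ((b-a)/3)).
  set (b' := b - Rmin (db/2) ((b-a)/3)).
  assert (Ma1 := Rmin_l (da/2) ((b-a)/3)). assert (Ma2 := Rmin_r (da/2) ((b-a)/3)).
  assert (Mb1 := Rmin_l (db/2) ((b-a)/3)). assert (Mb2 := Rmin_r (db/2) ((b-a)/3)).
  assert (Ma3 : 0 < Rmin (da/2) ((b-a)/3)) by (apply Rmin_pos; lra).
  assert (Mb3 : 0 < Rmin (db/2) ((b-a)/3)) by (apply Rmin_pos; lra).
  assert (Ea : Rabs (f a' - f a - lam * (a' - a)) <= 2 * K * (a' - a)).
  { rewrite <- (Rabs_right (a' - a)) at 2 by (unfold a'; lra).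
    apply piece with f'.
    - apply Hda1. unfold inI, a'; lra.
      rewrite Rabs_right by (unfold a'; lra). unfold a'; lra.
    - apply HB; lra.
    - unfold a'; lra. }
  assert (Eb : Rabs (f b - f b' - lam * (b - b')) <= 2 * K * (b - b')).
  { replace (f b - f b' - lam * (b - b')) with (- (f b' - f b - lam * (b' - b))) by ring.
    rewrite Rabs_Ropp.
    replace (2 * K * (b - b')) with (2 * K * Rabs (b' - b)) by (rewrite Rabs_left by (unfold b'; lra); ring).
    apply piece with f'.
    - apply Hdb1. unfold inI, b'; lra.
      rewrite Rabs_left by (unfold b'; lra). unfold b'; lra.
    - apply HB; lra.
    - unfold b'; lra. }
  assert (Hab' : a' < b') by (unfold a', b'; lra).
  destruct (MVT_cor2 f f' a' b' Hab') as [c [Hc1 Hc2]].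
  { intros c Hc. apply deriv_interior with (f := f) (f' := f'); auto.
    unfold a', b' in *; lra. }
  assert (Em : Rabs (f b' - f a' - lam * (b' - a')) <= K * (b' - a')).
  { rewrite Hc1. replace (f' c * (b' - a') - lam * (b' - a')) with ((f' c - lam) * (b' - a')) by ring.
    rewrite Rabs_mult, (Rabs_right (b' - a')) by lra.
    apply Rmult_le_compat_r. lra. apply HB. unfold a', b' in *; lra. }
  replace (f b - f a - lam * (b - a)) with
    ((f b - f b' - lam * (b - b')) + (f b' - f a' - lam * (b' - a')) + (f a' - f a - lam * (a' - a))) by ring.
  eapply Rle_trans. apply Rabs_triang.
  eapply Rle_trans. apply Rplus_le_compat_r. apply Rabs_triang.
  assert (K * (b' - a') <= 2 * K * (b' - a')) by nra.
  assert (2 * K * (b - b') + 2 * K * (b' - a') + 2 * K * (a' - a) = 2 * K * (b - a)) by ring.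
  lra.
Qed.


Lemma C1_Sd f p : C1_on_I f -> inI p -> exists lam, Sd f p lam.
Proof.
  intros [f' [Hd Hc]] Hp. exists (f' p). intros eps Heps.
  destruct (Hc p Hp (eps/2) ltac:(lra)) as [d [Hd0 Hd1]].
  exists d. split; auto. intros y z Hy Hz Hyp Hzp.
  assert (Hmid : forall a b c, inI a -> inI b -> Rabs (a - p) < d -> Rabs (b - p) < d ->
             a <= c <= b -> Rabs (f' c - f' p) <= eps/2).
  { intros a b c Ha Hb Hap Hbp Hc'. left. apply Hd1.
    unfold inI in *; lra. revert Hap Hbp. rabs_split; intros; lra. }
  destruct (Rtotal_order y z) as [Hlt | [Heq | Hgt]].
  - replace (f y - f z - f' p * (y - z)) with (- (f z - f y - f' p * (z - y))) by ring.
    rewrite Rabs_Ropp, (Rabs_left (y - z)) by lra.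
    replace (eps * - (y - z)) with (2 * (eps/2) * (z - y)) by field.
    apply mvi with f'; auto. lra.
    intros c Hc'. apply (Hmid y z c); auto.
  - subst. replace (z - z) with 0 by ring. replace (f z - f z - f' p * 0) with 0 by ring.
    rewrite Rabs_R0. lra.
  - rewrite (Rabs_right (y - z)) by lra.
    replace (eps * (y - z)) with (2 * (eps/2) * (y - z)) by field.
    apply mvi with f'; auto. lra.
    intros c Hc'. apply (Hmid z y c); auto.
Qed.

Lemma near_point p d : inI p -> 0 < d -> exists z, inI z /\ z <> p /\ Rabs (z - p) < d.
Proof.
  intros Hp Hd. unfold inI in *.
  set (e := Rmin d (1/2) / 2).
  assert (E1 := Rmin_l d (1/2)). assert (E2 := Rmin_r d (1/2)).
  assert (E3 : 0 < Rmin d (1/2)) by (apply Rmin_pos; lra).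
  destruct (Rle_dec p (1/2)).
  - exists (p + e). unfold e. split. lra. split. lra.
    rewrite Rabs_right; lra.
  - exists (p - e). unfold e. split. lra. split. lra.
    rewrite Rabs_left; lra.
Qed.

Lemma Sd_unique f p l1 l2 : inI p -> Sd f p l1 -> Sd f p l2 -> l1 = l2.
Proof.
  intros Hp H1 H2.
  destruct (Req_dec l1 l2) as [|Hne]; auto. exfalso.
  set (eps := Rabs (l1 - l2) / 4).
  assert (He : 0 < eps) by (unfold eps; assert (0 < Rabs (l1 - l2)) by (apply Rabs_pos_lt; lra); lra).
  destruct (H1 eps He) as [d1 [Hd1 K1]]. destruct (H2 eps He) as [d2 [Hd2 K2]].
  destruct (near_point p (Rmin d1 d2) Hp) as [z [Hz [Hzp Hzd]]]. apply Rmin_pos; auto.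
  assert (M1 := Rmin_l d1 d2). assert (M2 := Rmin_r d1 d2).
  assert (A1 := K1 z p Hz Hp ltac:(lra) ltac:(rewrite Rminus_diag, Rabs_R0; lra)).
  assert (A2 := K2 z p Hz Hp ltac:(lra) ltac:(rewrite Rminus_diag, Rabs_R0; lra)).
  assert (Hzp' : 0 < Rabs (z - p)) by (apply Rabs_pos_lt; lra).
  assert (Rabs ((l1 - l2) * (z - p)) <= 2 * eps * Rabs (z - p)).
  { replace ((l1 - l2) * (z - p)) with ((f z - f p - l2 * (z - p)) - (f z - f p - l1 * (z - p))) by ring.
    eapply Rle_trans. apply Rabs_triang. rewrite Rabs_Ropp. lra. }
  rewrite Rabs_mult in H. unfold eps in H.
  assert (0 < Rabs (l1 - l2)) by (apply Rabs_pos_lt; lra).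
  nra.
Qed.

Lemma Sd_ext f g p l : (forall x, inI x -> f x = g x) -> Sd f p l -> Sd g p l.
Proof.
  intros E H eps He. destruct (H eps He) as [d [Hd K]]. exists d; split; auto.
  intros y z Hy Hz Hyp Hzp. rewrite <- !E by auto. auto.
Qed.

Lemma Sd_id p : Sd (fun x => x) p 1.
Proof.
  intros eps He. exists 1. split. lra. intros.
  replace (y - z - 1 * (y - z)) with 0 by ring. rewrite Rabs_R0.
  apply Rmult_le_pos; [lra | apply Rabs_pos].
Qed.

Lemma Sd_lip f p l : Sd f p l -> exists d, 0 < d /\
  forall y z, inI y -> inI z -> Rabs (y - p) < d -> Rabs (z - p) < d ->
    Rabs (f y - f z) <= (Rabs l + 1) * Rabs (y - z).
Proof.
  intros H. destruct (H 1 ltac:(lra)) as [d [Hd K]]. exists d; split; auto.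
  intros y z Hy Hz Hyp Hzp. specialize (K y z Hy Hz Hyp Hzp).
  replace (f y - f z) with ((f y - f z - l * (y - z)) + l * (y - z)) by ring.
  eapply Rle_trans. apply Rabs_triang. rewrite Rabs_mult. lra.
Qed.

Lemma Sd_comp a b p la lb : inI p -> Sd a p la -> Sd b p lb -> b p = p ->
  (forall x, inI x -> inI (b x)) -> Sd (fun x => a (b x)) p (la * lb).
Proof.
  intros Hp Ha Hb Hbp HbI eps He.
  destruct (Sd_lip b p lb Hb) as [d1 [Hd1 L1]].
  set (L := Rabs lb + 1).
  assert (HL : 0 < L) by (unfold L; assert (0 <= Rabs lb) by apply Rabs_pos; lra).
  assert (HLa : 0 < Rabs la + 1) by (assert (0 <= Rabs la) by apply Rabs_pos; lra).
  destruct (Ha (eps / (2 * L)) ltac:(apply Rdiv_lt_0_compat; lra)) as [da [Hda Ka]].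
  destruct (Hb (eps / (2 * (Rabs la + 1))) ltac:(apply Rdiv_lt_0_compat; lra)) as [d2 [Hd2 K2]].
  exists (Rmin d1 (Rmin d2 (da / L))). split.
  { apply Rmin_pos; auto. apply Rmin_pos; auto. apply Rdiv_lt_0_compat; lra. }
  intros y z Hy Hz Hyp Hzp.
  assert (M1 := Rmin_l d1 (Rmin d2 (da / L))). assert (M2 := Rmin_r d1 (Rmin d2 (da / L))).
  assert (M3 := Rmin_l d2 (da / L)). assert (M4 := Rmin_r d2 (da / L)).
  assert (Hp0 : Rabs (p - p) < d1) by (rewrite Rminus_diag, Rabs_R0; lra).
  assert (Near : forall w, inI w -> Rabs (w - p) < Rmin d1 (Rmin d2 (da / L)) -> Rabs (b w - p) < da).
  { intros w Hw Hwp. assert (X := L1 w p Hw Hp ltac:(lra) Hp0). rewrite Hbp in X.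
    fold L in X. assert (Rabs (w - p) * L < da).
    { assert (Rabs (w - p) < da / L) by lra.
      apply (Rmult_lt_compat_r L) in H; auto. unfold Rdiv in H. rewrite Rmult_assoc, Rinv_l in H; lra. }
    lra. }
  assert (A1 := Ka (b y) (b z) (HbI y Hy) (HbI z Hz) (Near y Hy Hyp) (Near z Hz Hzp)).
  assert (A2 := K2 y z Hy Hz ltac:(lra) ltac:(lra)).
  assert (A3 := L1 y z Hy Hz ltac:(lra) ltac:(lra)). fold L in A3.
  replace (a (b y) - a (b z) - la * lb * (y - z)) with
    ((a (b y) - a (b z) - la * (b y - b z)) + la * (b y - b z - lb * (y - z))) by ring.
  eapply Rle_trans. apply Rabs_triang. rewrite Rabs_mult.
  assert (B1 : eps / (2 * L) * Rabs (b y - b z) <= eps / 2 * Rabs (y - z)).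
  { replace (eps / 2 * Rabs (y - z)) with (eps / (2 * L) * (L * Rabs (y - z))) by (field; lra).
    apply Rmult_le_compat_l. left; apply Rdiv_lt_0_compat; lra. lra. }
  assert (B2 : Rabs la * Rabs (b y - b z - lb * (y - z)) <= eps / 2 * Rabs (y - z)).
  { eapply Rle_trans. apply Rmult_le_compat_l. apply Rabs_pos. exact A2.
    replace (eps / 2 * Rabs (y - z)) with ((Rabs la + 1) * (eps / (2 * (Rabs la + 1)) * Rabs (y - z))) by (field; lra).
    apply Rmult_le_compat_r. apply Rmult_le_pos. left; apply Rdiv_lt_0_compat; lra. apply Rabs_pos. lra. }
  lra.
Qed.

Lemma Sd_fixed f p l : inI p -> Sd f p l ->
  (forall eps, 0 < eps -> exists q, inI q /\ f q = q /\ Rabs (q - p) < eps) -> f p = p.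
Proof.
  intros Hp H Hq. destruct (Sd_lip f p l H) as [d [Hd L]].
  destruct (Req_dec (f p) p) as [|Hne]; auto. exfalso.
  set (e := Rabs (f p - p)). assert (He : 0 < e) by (apply Rabs_pos_lt; lra).
  assert (HL : 0 < Rabs l + 2) by (assert (0 <= Rabs l) by apply Rabs_pos; lra).
  destruct (Hq (Rmin d (e / (Rabs l + 2)))) as [q [HqI [Hfq Hqp]]].
  { apply Rmin_pos; auto. apply Rdiv_lt_0_compat; lra. }
  assert (M1 := Rmin_l d (e / (Rabs l + 2))). assert (M2 := Rmin_r d (e / (Rabs l + 2))).
  assert (X := L p q Hp HqI ltac:(rewrite Rminus_diag, Rabs_R0; lra) ltac:(lra)).
  rewrite Hfq in X.
  assert (e <= (Rabs l + 2) * Rabs (q - p)).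
  { unfold e. replace (f p - p) with ((f p - q) + (q - p)) by ring.
    eapply Rle_trans. apply Rabs_triang. rewrite (Rabs_minus_sym p q) in X. lra. }
  assert (Rabs (q - p) * (Rabs l + 2) < e).
  { assert (Rabs (q - p) < e / (Rabs l + 2)) by lra.
    apply (Rmult_lt_compat_r (Rabs l + 2)) in H1; auto. unfold Rdiv in H1.
    rewrite Rmult_assoc, Rinv_l in H1; lra. }
  lra.
Qed.


Section Main.
Context (G : Type) (mul : G -> G -> G) (inv : G -> G) (one : G)
  (Ggrp : is_group mul inv one)
  (rho : G -> R -> R) (Hrho : inj_hom_Diff1p mul one rho)
  (n : nat) (hgen : nat -> G) (p : R) (Hp : inI p).

Definition Hs := gen_by mul inv one (fun g => exists i, (1 <= i <= n)%nat /\ g = hgen i).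

Lemma rho_I a x : inI x -> inI (rho a x).
Proof. destruct Hrho as [D _]. destruct (D a) as [X _]. auto. Qed.
Lemma rho_C1 a : C1_on_I (rho a).
Proof. destruct Hrho as [D _]. destruct (D a) as [_ [[g [_ [X _]]] _]]. auto. Qed.
Lemma rho_mono a x y : inI x -> inI y -> x < y -> rho a x < rho a y.
Proof. destruct Hrho as [D _]. destruct (D a) as [_ [_ X]]. auto. Qed.
Lemma rho_mul a b x : inI x -> rho (mul a b) x = rho a (rho b x).
Proof. destruct Hrho as [_ [X _]]. auto. Qed.
Lemma rho_one x : inI x -> rho one x = x.
Proof. destruct Hrho as [_ [_ [X _]]]. auto. Qed.
Lemma rho_inv_l a x : inI x -> rho (inv a) (rho a x) = x.
Proof. intros. rewrite <- rho_mul, (grp_inv_l Ggrp), rho_one; auto. Qed.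
Lemma rho_inv_r a x : inI x -> rho a (rho (inv a) x) = x.
Proof. intros. rewrite <- rho_mul, (grp_inv_r Ggrp), rho_one; auto. Qed.
Lemma rho_mono_le a x y : inI x -> inI y -> x <= y -> rho a x <= rho a y.
Proof. intros. destruct H1. left; apply rho_mono; auto. subst; lra. Qed.
Lemma rho_mono_rev a x y : inI x -> inI y -> rho a x < rho a y -> x < y.
Proof.
  intros Hx Hy H. destruct (Rlt_le_dec x y); auto.
  assert (rho a y <= rho a x) by (apply rho_mono_le; auto). lra.
Qed.

Definition lam (a : G) : R :=
  proj1_sig (constructive_indefinite_description _ (C1_Sd (rho a) p (rho_C1 a) Hp)).
Lemma lam_spec a : Sd (rho a) p (lam a).
Proof. unfold lam. destruct (constructive_indefinite_description _ _). auto. Qed.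

Lemma lam_mul a b : rho b p = p -> lam (mul a b) = lam a * lam b.
Proof.
  intros Hb. apply Sd_unique with (rho (mul a b)) p; auto. apply lam_spec.
  apply Sd_ext with (fun x => rho a (rho b x)). intros; rewrite rho_mul; auto.
  apply Sd_comp; auto using lam_spec, rho_I.
Qed.

Lemma lam_one : lam one = 1.
Proof.
  apply Sd_unique with (rho one) p; auto. apply lam_spec.
  apply Sd_ext with (fun x => x). intros; rewrite rho_one; auto. apply Sd_id.
Qed.

Hypothesis Hfix : forall eps, 0 < eps -> exists q, fixset rho Hs q /\ Rabs (q - p) < eps.

Lemma Hs_fix_p a : Hs a -> rho a p = p.
Proof.
  intros Ha. apply Sd_fixed with (lam a); auto. apply lam_spec.
  intros eps He. destruct (Hfix eps He) as [q [[Hq1 Hq2] Hq3]]. exists q; auto.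
Qed.

Lemma Hs_mul a b : Hs a -> Hs b -> Hs (mul a b).
Proof. intros; apply gen_mul; auto. Qed.
Lemma Hs_inv a : Hs a -> Hs (inv a).
Proof. intros; apply gen_inv; auto. Qed.
Lemma Hs_one : Hs one.
Proof. apply gen_one. Qed.

Lemma lam_inv a : Hs a -> lam (inv a) * lam a = 1.
Proof. intros Ha. rewrite <- lam_mul by (apply Hs_fix_p; auto). rewrite (grp_inv_l Ggrp). apply lam_one. Qed.

Definition Cs := commutator_subgroup mul inv one Hs.

Lemma Cs_Hs h : Cs h -> Hs h.
Proof.
  induction 1.
  - destruct H as [a [b [Ha [Hb E]]]]. subst. auto using Hs_mul, Hs_inv.
  - apply Hs_one.
  - auto using Hs_mul.
  - auto using Hs_inv.
Qed.

Lemma Cs_lam h : Cs h -> lam h = 1.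
Proof.
  induction 1.
  - destruct H as [a [b [Ha [Hb E]]]]. subst.
    rewrite lam_mul by (apply Hs_fix_p; auto using Hs_mul).
    rewrite lam_mul by (apply Hs_fix_p; auto using Hs_mul, Hs_inv).
    rewrite lam_mul by (apply Hs_fix_p; auto using Hs_mul).
    replace (lam (inv a) * lam (inv b) * (lam a * lam b)) with
      ((lam (inv a) * lam a) * (lam (inv b) * lam b)) by ring.
    rewrite !lam_inv; auto. ring.
  - apply lam_one.
  - rewrite lam_mul. rewrite IHgen_by1, IHgen_by2; ring. apply Hs_fix_p, Cs_Hs; auto.
  - assert (X := lam_inv x (Cs_Hs x H)). rewrite IHgen_by in X. lra.
Qed.


Definition disp (k : nat) (e : bool) (x : R) : R :=
  rho (signed_pow inv (hgen k) e) x - x.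

Fixpoint Dm (j : nat) (x : R) : R :=
  match j with
  | O => 0
  | S j' => Rmax (Dm j' x) (Rmax (disp (S j') true x) (disp (S j') false x))
  end.

Lemma Dm_ge0 j x : 0 <= Dm j x.
Proof.
  induction j; simpl. lra. eapply Rle_trans. apply IHj. apply Rmax_l.
Qed.

Lemma Dm_ge j k e x : (1 <= k <= j)%nat -> disp k e x <= Dm j x.
Proof.
  induction j; intros Hk. lia.
  simpl. destruct (Nat.eq_dec k (S j)) as [E|E].
  - subst. eapply Rle_trans. 2: apply Rmax_r. destruct e. apply Rmax_l. apply Rmax_r.
  - eapply Rle_trans. apply IHj. lia. apply Rmax_l.
Qed.

Lemma Dm_att j x : Dm j x = 0 \/ exists k e, (1 <= k <= j)%nat /\ Dm j x = disp k e x.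
Proof.
  induction j; simpl. auto.
  assert (Hin : (1 <= S j <= S j)%nat) by lia.
  destruct (Rle_lt_dec (disp (S j) true x) (disp (S j) false x)) as [H1|H1];
    [rewrite (Rmax_right _ _ H1) | rewrite (Rmax_left _ _ (Rlt_le _ _ H1))];
  match goal with |- context [Rmax (Dm j x) ?t] =>
    destruct (Rle_lt_dec (Dm j x) t) as [H2|H2];
    [rewrite (Rmax_right _ _ H2) | rewrite (Rmax_left _ _ (Rlt_le _ _ H2))] end;
  try (right; eexists; eexists; split; [exact Hin | reflexivity]);
  destruct IHj as [E | [k [e [Hk E]]]]; auto; right; exists k, e; split; auto; lia.
Qed.

Lemma D_pos x : inI x -> ~ fixset rho Hs x -> 0 < Dm n x.
Proof.
  intros Hx Hnf. destruct (Rlt_le_dec 0 (Dm n x)) as [|Hle]; auto. exfalso. apply Hnf.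
  split; auto.
  assert (Gen : forall i, (1 <= i <= n)%nat -> rho (hgen i) x = x).
  { intros i Hi. assert (A1 := Dm_ge n i true x Hi). assert (A2 := Dm_ge n i false x Hi).
    unfold disp in *; simpl in *.
    set (y := rho (inv (hgen i)) x) in *.
    assert (Hy : inI y) by (apply rho_I; auto).
    assert (E : rho (hgen i) y = x) by (apply rho_inv_r; auto).
    destruct (Rlt_le_dec y x).
    + assert (rho (hgen i) y < rho (hgen i) x) by (apply rho_mono; auto). exfalso; lra.
    + assert (y = x) by lra. rewrite H in E. auto. }
  intros h Hh. induction Hh.
  - destruct H as [i [Hi E]]. subst. auto.
  - apply rho_one; auto.
  - rewrite rho_mul by auto. rewrite IHHh2. auto.
  - rewrite <- IHHh at 1. apply rho_inv_l; auto.
Qed.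


Ltac minle := solve [ apply Rle_refl
  | eapply Rle_trans; [apply Rmin_l | minle]
  | eapply Rle_trans; [apply Rmin_r | minle] ].
Ltac ltmin H := eapply Rlt_le_trans; [exact H | minle].

Lemma near2 a : lam a = 1 -> rho a p = p -> exists d, 0 < d /\
  forall x, inI x -> Rabs (x - p) < d -> Rabs (rho a x - p) <= 2 * Rabs (x - p).
Proof.
  intros Hl Hap. destruct (Sd_lip _ _ _ (lam_spec a)) as [d [Hd L]].
  exists d. split; auto. intros x Hx Hxp.
  assert (X := L x p Hx Hp Hxp ltac:(rewrite Rminus_diag, Rabs_R0; lra)).
  rewrite Hap, Hl, Rabs_R1 in X. lra.
Qed.

Lemma dlip a eps : lam a = 1 -> 0 < eps -> exists d, 0 < d /\
  forall y z, inI y -> inI z -> Rabs (y - p) < d -> Rabs (z - p) < d ->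
    Rabs ((rho a y - y) - (rho a z - z)) <= eps * Rabs (y - z).
Proof.
  intros Hl He. destruct (lam_spec a eps He) as [d [Hd K]]. exists d; split; auto.
  intros y z Hy Hz Hyp Hzp. specialize (K y z Hy Hz Hyp Hzp). rewrite Hl in K.
  replace (rho a y - y - (rho a z - z)) with (rho a y - rho a z - 1 * (y - z)) by ring. auto.
Qed.

Section Case2.
Hypothesis Hall : forall a, Hs a -> lam a = 1.

Lemma invdisp1 a : Hs a -> exists d, 0 < d /\ forall x, inI x -> Rabs (x - p) < d ->
  Rabs (rho (inv a) x - x) <= 2 * Rabs (rho a x - x).
Proof.
  intros Ha.
  destruct (near2 (inv a)) as [d1 [Hd1 N1]]; auto using Hs_inv, Hs_fix_p.
  destruct (dlip a (1/2)) as [d2 [Hd2 L2]]; auto. lra.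
  exists (Rmin d1 (Rmin d2 (d2/2))). split. repeat apply Rmin_pos; lra.
  intros x Hx Hxp.
  set (y := rho (inv a) x).
  assert (Hy : inI y) by (apply rho_I; auto).
  assert (Ey : rho a y = x) by (apply rho_inv_r; auto).
  assert (Ny := N1 x Hx ltac:(ltmin Hxp)). fold y in Ny.
  assert (X := L2 y x Hy Hx ltac:(assert (Rabs (x - p) < d2/2) by ltmin Hxp; lra) ltac:(ltmin Hxp)).
  rewrite Ey in X. revert X. rabs_split; intros; lra.
Qed.

Lemma invdisp2 a : Hs a -> exists d, 0 < d /\ forall x, inI x -> Rabs (x - p) < d ->
  Rabs (rho a x - x) <= 2 * Rabs (rho (inv a) x - x).
Proof.
  intros Ha.
  destruct (near2 (inv a)) as [d1 [Hd1 N1]]; auto using Hs_inv, Hs_fix_p.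
  destruct (dlip a (1/2)) as [d2 [Hd2 L2]]; auto. lra.
  exists (Rmin d1 (Rmin d2 (d2/2))). split. repeat apply Rmin_pos; lra.
  intros x Hx Hxp.
  set (y := rho (inv a) x).
  assert (Hy : inI y) by (apply rho_I; auto).
  assert (Ey : rho a y = x) by (apply rho_inv_r; auto).
  assert (Ny := N1 x Hx ltac:(ltmin Hxp)). fold y in Ny.
  assert (X := L2 x y Hx Hy ltac:(ltmin Hxp) ltac:(assert (Rabs (x - p) < d2/2) by ltmin Hxp; lra)).
  rewrite Ey in X. revert X. rabs_split; intros; lra.
Qed.

Lemma disp_mul a b : Hs a -> Hs b -> exists d, 0 < d /\ forall x, inI x -> Rabs (x - p) < d ->
  Rabs (rho (mul a b) x - x) <= 2 * Rabs (rho b x - x) + Rabs (rho a x - x).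
Proof.
  intros Ha Hb.
  destruct (near2 b) as [d1 [Hd1 N1]]; auto using Hs_fix_p.
  destruct (dlip a 1) as [d2 [Hd2 L2]]; auto. lra.
  exists (Rmin d1 (Rmin d2 (d2/2))). split. repeat apply Rmin_pos; lra.
  intros x Hx Hxp. rewrite rho_mul by auto.
  set (y := rho b x).
  assert (Hy : inI y) by (apply rho_I; auto).
  assert (Ny := N1 x Hx ltac:(ltmin Hxp)). fold y in Ny.
  assert (X := L2 y x Hy Hx ltac:(assert (Rabs (x - p) < d2/2) by ltmin Hxp; lra) ltac:(ltmin Hxp)).
  revert X. rabs_split; intros; lra.
Qed.

Lemma Bnd a : Hs a -> exists C, 0 <= C /\ exists d, 0 < d /\
  forall x, inI x -> Rabs (x - p) < d -> Rabs (rho a x - x) <= C * Dm n x.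
Proof.
  induction 1 as [a Hg | | a b Ha IHa Hb IHb | a Ha IHa].
  - destruct Hg as [i [Hi E]]. subst a.
    assert (Hs (hgen i)) by (apply gen_base; eauto).
    destruct (invdisp2 (hgen i)) as [d [Hd K]]; auto.
    exists 2. split. lra. exists d. split; auto. intros x Hx Hxp.
    assert (A1 := Dm_ge n i true x Hi). assert (A2 := Dm_ge n i false x Hi).
    assert (A0 := Dm_ge0 n x).
    unfold disp in A1, A2; simpl in A1, A2.
    destruct (Rle_lt_dec x (rho (hgen i) x)).
    + rewrite Rabs_right by lra. lra.
    + assert (x <= rho (inv (hgen i)) x).
      { destruct (Rle_lt_dec x (rho (inv (hgen i)) x)); auto.
        assert (rho (hgen i) (rho (inv (hgen i)) x) < rho (hgen i) x)
          by (apply rho_mono; auto using rho_I).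
        rewrite rho_inv_r in H0 by auto. lra. }
      specialize (K x Hx Hxp). rewrite (Rabs_right (rho (inv (hgen i)) x - x)) in K by lra. lra.
  - exists 0. split. lra. exists 1. split. lra. intros x Hx _.
    rewrite rho_one by auto. rewrite Rminus_diag, Rabs_R0. lra.
  - destruct IHa as [Ca [HCa [da [Hda Ka]]]]. destruct IHb as [Cb [HCb [db [Hdb Kb]]]].
    destruct (disp_mul a b Ha Hb) as [dm [Hdm Km]].
    exists (Ca + 2 * Cb). split. lra.
    exists (Rmin da (Rmin db dm)). split. repeat apply Rmin_pos; lra.
    intros x Hx Hxp.
    specialize (Ka x Hx ltac:(ltmin Hxp)). specialize (Kb x Hx ltac:(ltmin Hxp)).
    specialize (Km x Hx ltac:(ltmin Hxp)). lra.
  - destruct IHa as [Ca [HCa [da [Hda Ka]]]].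
    destruct (invdisp1 a Ha) as [di [Hdi Ki]].
    exists (2 * Ca). split. lra.
    exists (Rmin da di). split. repeat apply Rmin_pos; lra.
    intros x Hx Hxp.
    specialize (Ka x Hx ltac:(ltmin Hxp)). specialize (Ki x Hx ltac:(ltmin Hxp)). lra.
Qed.


Lemma Small h : Cs h -> forall eps, 0 < eps -> exists d, 0 < d /\
  forall x, inI x -> Rabs (x - p) < d -> Rabs (rho h x - x) <= eps * Dm n x.
Proof.
  induction 1 as [c Hc | | c1 c2 H1 IH1 H2 IH2 | c H1 IH1]; intros eps He.
  - destruct Hc as [a [b [Ha [Hb E]]]]. subst c.
    set (F := mul (inv a) (inv b)).
    assert (HF : Hs F) by (apply Hs_mul; apply Hs_inv; auto).
    destruct (Sd_lip _ _ _ (lam_spec F)) as [dF [HdF LF]]. rewrite (Hall F HF), Rabs_R1 in LF.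
    destruct (Bnd a Ha) as [Ca [HCa [da [Hda Ka]]]].
    destruct (Bnd b Hb) as [Cb [HCb [db [Hdb Kb]]]].
    destruct (near2 a) as [na [Hna Na]]; auto using Hs_fix_p.
    destruct (near2 b) as [nb [Hnb Nb]]; auto using Hs_fix_p.
    set (e := eps / (2 * (Ca + Cb + 1))).
    assert (He' : 0 < e) by (unfold e; apply Rdiv_lt_0_compat; lra).
    destruct (dlip a e) as [la [Hla La]]; auto.
    destruct (dlip b e) as [lb [Hlb Lb]]; auto.
    exists (Rmin da (Rmin db (Rmin (na/2) (Rmin (nb/2) (Rmin (la/2) (Rmin (lb/2) (dF/4))))))).
    split. repeat apply Rmin_pos; lra.
    intros x Hx Hxp.
    assert (X1 : Rabs (x - p) < da) by ltmin Hxp.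
    assert (X2 : Rabs (x - p) < db) by ltmin Hxp.
    assert (X3 : Rabs (x - p) < na/2) by ltmin Hxp.
    assert (X4 : Rabs (x - p) < nb/2) by ltmin Hxp.
    assert (X5 : Rabs (x - p) < la/2) by ltmin Hxp.
    assert (X6 : Rabs (x - p) < lb/2) by ltmin Hxp.
    assert (X7 : Rabs (x - p) < dF/4) by ltmin Hxp.
    assert (P0 : 0 <= Rabs (x - p)) by apply Rabs_pos.
    set (ax := rho a x). set (bx := rho b x).
    assert (Iax : inI ax) by (apply rho_I; auto).
    assert (Ibx : inI bx) by (apply rho_I; auto).
    set (u := rho a bx). set (w := rho b ax).
    assert (Iu : inI u) by (apply rho_I; auto).
    assert (Iw : inI w) by (apply rho_I; auto).
    assert (Nax := Na x Hx ltac:(lra)). assert (Nbx := Nb x Hx ltac:(lra)).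
    fold ax in Nax. fold bx in Nbx.
    assert (Nu := Na bx Ibx ltac:(lra)). assert (Nw := Nb ax Iax ltac:(lra)).
    fold u in Nu. fold w in Nw.
    assert (Ec : rho (mul F (mul a b)) x = rho F u).
    { rewrite rho_mul, rho_mul by auto. reflexivity. }
    assert (Ex : rho F w = x).
    { unfold F, w, ax. rewrite rho_mul by auto using rho_I. rewrite rho_inv_l by auto using rho_I.
      apply rho_inv_l; auto. }
    assert (LFu := LF u w Iu Iw ltac:(lra) ltac:(lra)).
    assert (LAa := La bx x Ibx Hx ltac:(lra) ltac:(lra)). fold u ax in LAa.
    assert (LBb := Lb ax x Iax Hx ltac:(lra) ltac:(lra)). fold w bx in LBb.
    specialize (Ka x Hx X1). specialize (Kb x Hx X2). fold ax in Ka. fold bx in Kb.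
    rewrite Ec. replace (rho F u - x) with (rho F u - rho F w) by (rewrite Ex; reflexivity).
    assert (Huw : Rabs (u - w) <= e * Rabs (bx - x) + e * Rabs (ax - x)).
    { replace (u - w) with ((u - bx - (ax - x)) - (w - ax - (bx - x))) by ring.
      eapply Rle_trans. apply Rabs_triang. rewrite Rabs_Ropp.
      lra. }
    set (D := Dm n x) in *. assert (HD : 0 <= D) by apply Dm_ge0.
    assert (T1 : e * Rabs (bx - x) <= e * (Cb * D)) by (apply Rmult_le_compat_l; lra).
    assert (T2 : e * Rabs (ax - x) <= e * (Ca * D)) by (apply Rmult_le_compat_l; lra).
    assert (T3 : 2 * e * (Ca + Cb) <= eps).
    { unfold e. replace eps with (eps / (2 * (Ca + Cb + 1)) * (2 * (Ca + Cb + 1))) at 2 by (field; lra).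
      fold e. nra. }
    assert (T4 : 2 * e * (Ca + Cb) * D <= eps * D) by (apply Rmult_le_compat_r; lra).
    lra.
  - exists 1. split. lra. intros x Hx _.
    rewrite rho_one by auto. rewrite Rminus_diag, Rabs_R0.
    assert (0 <= Dm n x) by apply Dm_ge0. nra.
  - destruct (IH1 (eps/3)) as [d1 [Hd1 K1]]. lra.
    destruct (IH2 (eps/3)) as [d2 [Hd2 K2]]. lra.
    destruct (disp_mul c1 c2) as [dm [Hdm Km]]; auto using Cs_Hs.
    exists (Rmin d1 (Rmin d2 dm)). split. repeat apply Rmin_pos; lra.
    intros x Hx Hxp.
    specialize (K1 x Hx ltac:(ltmin Hxp)). specialize (K2 x Hx ltac:(ltmin Hxp)).
    specialize (Km x Hx ltac:(ltmin Hxp)). lra.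
  - destruct (IH1 (eps/2)) as [d1 [Hd1 K1]]. lra.
    destruct (invdisp1 c) as [di [Hdi Ki]]; auto using Cs_Hs.
    exists (Rmin d1 di). split. repeat apply Rmin_pos; lra.
    intros x Hx Hxp.
    specialize (K1 x Hx ltac:(ltmin Hxp)). specialize (Ki x Hx ltac:(ltmin Hxp)). lra.
Qed.

End Case2.

Lemma Key1 : (exists i, (1 <= i <= n)%nat /\ lam (hgen i) <> 1) ->
  forall h, Cs h -> exists d, 0 < d /\
  forall x, inI x -> Rabs (x - p) < d -> rho h x - x <= 1/2 * Dm n x.
Proof.
  intros [i [Hi Hl]] h Hh.
  set (g := hgen i). set (gi := inv g).
  assert (Hg : Hs g) by (apply gen_base; eauto).
  assert (Hgi : Hs gi) by (apply Hs_inv; auto).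
  assert (Hli : lam gi <> 1).
  { intro E. assert (X := lam_inv g Hg). fold gi in X. rewrite E in X. apply Hl. fold g. lra. }
  set (c := Rmin (Rabs (lam g - 1)) (Rabs (lam gi - 1)) / 2).
  assert (C1 : 0 < Rabs (lam g - 1)) by (apply Rabs_pos_lt; fold g in Hl; lra).
  assert (C2 : 0 < Rabs (lam gi - 1)) by (apply Rabs_pos_lt; lra).
  assert (Hc : 0 < c) by (unfold c; assert (0 < Rmin (Rabs (lam g - 1)) (Rabs (lam gi - 1))) by (apply Rmin_pos; lra); lra).
  assert (C3 : 2 * c <= Rabs (lam g - 1)) by (unfold c; assert (X := Rmin_l (Rabs (lam g - 1)) (Rabs (lam gi - 1))); lra).
  assert (C4 : 2 * c <= Rabs (lam gi - 1)) by (unfold c; assert (X := Rmin_r (Rabs (lam g - 1)) (Rabs (lam gi - 1))); lra).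
  assert (Low : forall a, Hs a -> 2 * c <= Rabs (lam a - 1) -> exists d, 0 < d /\
     forall x, inI x -> Rabs (x - p) < d -> c * Rabs (x - p) <= Rabs (rho a x - x)).
  { intros a Ha Ca. destruct (lam_spec a c Hc) as [d [Hd K]]. exists d; split; auto.
    intros x Hx Hxp. specialize (K x p Hx Hp Hxp ltac:(rewrite Rminus_diag, Rabs_R0; lra)).
    rewrite (Hs_fix_p a Ha) in K.
    assert (E : (lam a - 1) * (x - p) = (rho a x - x) - (rho a x - p - lam a * (x - p))) by ring.
    assert (T : Rabs ((lam a - 1) * (x - p)) <= Rabs (rho a x - x) + Rabs (rho a x - p - lam a * (x - p))).
    { rewrite E. eapply Rle_trans. apply Rabs_triang. rewrite Rabs_Ropp. lra. }
    rewrite Rabs_mult in T.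
    assert (2 * c * Rabs (x - p) <= Rabs (lam a - 1) * Rabs (x - p)) by (apply Rmult_le_compat_r; auto using Rabs_pos).
    lra. }
  destruct (Low g Hg C3) as [d1 [Hd1 L1]].
  destruct (Low gi Hgi C4) as [d2 [Hd2 L2]].
  destruct (lam_spec h (c/2) ltac:(lra)) as [d3 [Hd3 K3]].
  assert (Hh1 := Cs_lam h Hh). assert (Hh2 := Hs_fix_p h (Cs_Hs h Hh)).
  exists (Rmin d1 (Rmin d2 d3)). split. repeat apply Rmin_pos; lra.
  intros x Hx Hxp.
  specialize (L1 x Hx ltac:(ltmin Hxp)). specialize (L2 x Hx ltac:(ltmin Hxp)).
  specialize (K3 x p Hx Hp ltac:(ltmin Hxp) ltac:(rewrite Rminus_diag, Rabs_R0; lra)).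
  rewrite Hh1, Hh2 in K3.
  assert (A1 := Dm_ge n i true x Hi). assert (A2 := Dm_ge n i false x Hi).
  unfold disp in A1, A2; simpl in A1, A2. fold g gi in A1, A2.
  assert (Hbig : c * Rabs (x - p) <= Dm n x).
  { destruct (Rle_lt_dec x (rho g x)).
    - rewrite (Rabs_right (rho g x - x)) in L1 by lra. lra.
    - assert (x <= rho gi x).
      { destruct (Rle_lt_dec x (rho gi x)); auto.
        assert (Q : rho g (rho gi x) < rho g x) by (apply rho_mono; unfold gi; auto using rho_I).
        unfold gi in Q. rewrite rho_inv_r in Q by auto. lra. }
      rewrite (Rabs_right (rho gi x - x)) in L2 by lra. lra. }
  revert K3. rabs_split; intros; lra.
Qed.

Lemma main_sec (ps : nat -> R) :
  (forall m, inI (ps m) /\ ~ fixset rho Hs (ps m)) -> Un_cv ps p ->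
  exists (k : nat -> nat) (e : nat -> bool),
    (forall m, (1 <= k m <= n)%nat) /\
    forall h, Cs h ->
      exists M : nat, forall m, (m >= M)%nat ->
        rho h (ps m) < rho (signed_pow inv (hgen (k m)) (e m)) (ps m).
Proof.
  intros Hps Hcv.
  assert (Hex : forall m, exists ke : nat * bool, (1 <= fst ke <= n)%nat /\
            Dm n (ps m) = disp (fst ke) (snd ke) (ps m)).
  { intros m. destruct (Hps m) as [HI HnF]. assert (Hpos := D_pos _ HI HnF).
    destruct (Dm_att n (ps m)) as [E | [k [e [Hk E]]]]. lra. exists (k, e). auto. }
  set (kef := fun m => proj1_sig (constructive_indefinite_description _ (Hex m))).
  assert (Hkef : forall m, (1 <= fst (kef m) <= n)%nat /\ Dm n (ps m) = disp (fst (kef m)) (snd (kef m)) (ps m)).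
  { intros m. unfold kef. destruct (constructive_indefinite_description _ _). auto. }
  exists (fun m => fst (kef m)), (fun m => snd (kef m)). split.
  { intros m. apply Hkef. }
  intros h Hh.
  assert (Key : exists d, 0 < d /\
    forall x, inI x -> Rabs (x - p) < d -> rho h x - x <= 1/2 * Dm n x).
  { destruct (classic (exists i, (1 <= i <= n)%nat /\ lam (hgen i) <> 1)) as [Hc | Hc].
    - apply Key1; auto.
    - assert (Hall : forall a, Hs a -> lam a = 1).
      { induction 1.
        - destruct H as [i [Hi E]]. subst. apply NNPP. intro. apply Hc. eauto.
        - apply lam_one.
        - rewrite lam_mul by (apply Hs_fix_p; auto). rewrite IHgen_by1, IHgen_by2. ring.
        - assert (X := lam_inv x H). rewrite IHgen_by in X. lra. }
      destruct (Small Hall h Hh (1/2) ltac:(lra)) as [d [Hd K]].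
      exists d. split; auto. intros x Hx Hxp. specialize (K x Hx Hxp).
      revert K. rabs_split; intros; lra. }
  destruct Key as [d [Hd K]].
  destruct (Hcv d Hd) as [M HM]. exists M. intros m Hm.
  specialize (HM m Hm). unfold R_dist in HM.
  destruct (Hps m) as [HI HnF]. assert (Hpos := D_pos _ HI HnF).
  specialize (K (ps m) HI HM). destruct (Hkef m) as [_ E].
  unfold disp in E. lra.
Qed.

End Main.


Theorem lemma2p7
  (G : Type) (mul : G -> G -> G) (inv : G -> G) (one : G)
  (Ggrp : is_group mul inv one)
  (rho : G -> R -> R) (Hrho : inj_hom_Diff1p mul one rho)
  (n : nat) (hgen : nat -> G)
  (p : R) (ps : nat -> R) :
  let H := gen_by mul inv one (fun g => exists i, (1 <= i <= n)%nat /\ g = hgen i) in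
  frontier_in_I (fixset rho H) p ->
  (forall m, inI (ps m) /\ ~ fixset rho H (ps m)) ->
  Un_cv ps p ->
  exists (k : nat -> nat) (e : nat -> bool),
    (forall m, (1 <= k m <= n)%nat) /\
    forall h, commutator_subgroup mul inv one H h ->
      exists M : nat, forall m, (m >= M)%nat ->
        rho h (ps m) < rho (signed_pow inv (hgen (k m)) (e m)) (ps m).
Proof.
  intros H Hfr Hps Hcv. destruct Hfr as [Hp [Hfix _]].
  exact (main_sec G mul inv one Ggrp rho Hrho n hgen p Hp Hfix ps Hps Hcv).
Qed.
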